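(* Let $G,H$ be groups and suppose that $\mathrm{Hom}(H,G)$ contains a homomorphism with infinite image. Let $\mathcal{T}=\phi^*\circ\tau$ with $\phi\in\mathrm{Hom}(H,G)$ and $\tau\in\mathrm{CA}(A^G)$. Then $\mathcal{T}$ is constant if and only if $\mathcal{T}=\psi^*\circ\tau$ for every $\psi\in\mathrm{Hom}(H,G)$.
   Context: $A$ is a finite set with $|A|\ge 2$. $A^G$ is the set of functions $G\to A$ with shift action $(g\cdot x)(k):=x(g^{-1}k)$. $\mathrm{CA}(A^G)$ is the set of maps $\tau:A^G\to A^G$ for which there exist finite $T\subseteq G$ and $\mu:A^T\to A$ with $\tau(x)(g)=\mu((g^{-1}\cdot x)|_T)$ for all $x,g$. For $\phi\in\mathrm{Hom}(H,G)$, $\phi^*:A^G\to A^H$ is $\phi^*(x):=x\circ\phi$. *)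

(* Defs.v *)
From Stdlib Require List.
From mathcomp Require Import all_boot.
Set Implicit Arguments. Unset Strict Implicit. Unset Printing Implicit Defensive.

Record group := Group {
  gcarrier :> Type;
  gmul : gcarrier -> gcarrier -> gcarrier;
  gone : gcarrier;
  ginv : gcarrier -> gcarrier;
  gmulA : forall x y z, gmul x (gmul y z) = gmul (gmul x y) z;
  gmul1 : forall x, gmul gone x = x;
  gmulV : forall x, gmul (ginv x) x = gone
}.

Arguments gmul {g}. Arguments gone {g}. Arguments ginv {g}.

Definition is_hom (H G : group) (f : H -> G) : Prop :=
  forall a b : H, f (gmul a b) = gmul (f a) (f b).

Definition infinite_image (H G : group) (f : H -> G) : Prop :=
  ~ exists l : list G, forall h : H, List.In (f h) l.

Definition shift (A : Type) (G : group) (g : G) (x : G -> A) : G -> A :=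
  fun k => x (gmul (ginv g) k).

(* Cellular automata on A^G: a finite memory set T = {t 0, ..., t (n-1)}
   and a local rule mu : A^T -> A. *)
Definition is_CA (A : finType) (G : group) (tau : (G -> A) -> (G -> A)) : Prop :=
  exists (n : nat) (t : 'I_n -> G) (mu : {ffun 'I_n -> A} -> A),
    forall (x : G -> A) (g : G),
      tau x g = mu [ffun i => shift (ginv g) x (t i)].

Definition pullback (A : Type) (H G : group) (phi : H -> G) (x : G -> A) : H -> A :=
  fun h => x (phi h).

Definition is_constant (X Y : Type) (F : X -> Y) : Prop :=
  exists c : Y, forall x, F x = c.

(* Main.v *)
From Stdlib Require Import Classical ClassicalEpsilon FunctionalExtensionality.
Require Import Defs.
From mathcomp Require Import all_boot.

Lemma gmulV' (G : group) (x : G) : gmul x (ginv x) = gone.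
Proof.
set y := gmul x (ginv x).
have yy : gmul y y = y.
  by rewrite /y -gmulA (gmulA (ginv x) x) gmulV gmul1.
by rewrite -(gmul1 y) -{1}(gmulV y) -gmulA yy gmulV.
Qed.

Arguments gmulV' {G}.
Lemma gmul1' (G : group) (x : G) : gmul x gone = x.
Proof. by rewrite -(gmulV x) gmulA gmulV' gmul1. Qed.

Arguments gmul1' {G}.
Lemma invgK (G : group) (x : G) : ginv (ginv x) = x.
Proof. by rewrite -(gmul1' (ginv (ginv x))) -(gmulV x) gmulA gmulV gmul1. Qed.

Lemma in_In (T : eqType) (x : T) (s : seq T) : x \in s -> List.In x s.
Proof.
elim: s => //= a s IH; rewrite in_cons => /orP [/eqP ->|]; first by left.
by move=> /IH; right.
Qed.

Theorem lemma3p8 (A : finType) (G H : group)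
  (hA : 2 <= #|A|)
  (hinf : exists f : H -> G, is_hom f /\ infinite_image f)
  (phi : H -> G) (hphi : is_hom phi)
  (tau : (G -> A) -> (G -> A)) (htau : is_CA tau) :
  is_constant (pullback phi \o tau) <->
  (forall psi : H -> G, is_hom psi -> pullback phi \o tau = pullback psi \o tau).
Proof.
case: htau => n [t [mu htau]].
have tauE : forall x g, tau x g = mu [ffun i => x (gmul g (t i))].
  move=> x g; rewrite htau; congr mu; apply/ffunP => i; rewrite !ffunE.
  by rewrite /shift invgK.
split.
- case=> c hc psi _.
  have key : forall x g, tau x g = c gone.
    move=> x g; set p := phi gone.
    pose y := fun k => x (gmul g (gmul (ginv p) k)).
    have -> : tau x g = tau y p.
      rewrite !tauE; congr mu; apply/ffunP => i; rewrite !ffunE /y.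
      by rewrite (gmulA (ginv p)) gmulV gmul1.
    by rewrite /p -(hc y).
  apply: functional_extensionality => x /=.
  apply: functional_extensionality => h.
  by rewrite /pullback !key.
- move=> Hall.
  have h0 : is_hom (fun _ : H => (gone : G)) by move=> a b; rewrite gmul1.
  have E0 : forall x h, tau x (phi h) = tau x gone.
    move=> x h; have := equal_f (Hall _ h0) x.
    by move=> /= /(fun e => equal_f e h).
  case/card_gt0P: (ltnW hA) => a _.
  exists (pullback phi (tau (fun _ => a))).
  move=> x; apply: functional_extensionality => h.
  rewrite /= /pullback !E0.
  case: hinf => f [hf finf].
  have Ef : forall z h, tau z (f h) = tau z gone.
    move=> z h'; have := equal_f (Hall _ hf) z.
    move=> /= /(fun e => equal_f e h'); rewrite /pullback => <-.
    by rewrite E0.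
  set l := List.map (fun ij : 'I_n * 'I_n => gmul (t ij.1) (ginv (t ij.2))) (enum (@predT ('I_n * 'I_n)%type)).
  have [h1 nh1] : exists h1, ~ List.In (f h1) l.
    apply: not_all_ex_not => allin; apply: finf; by exists l.
  set g := f h1.
  set y := fun _ : G => a.
  pose z := fun k => if excluded_middle_informative (exists j, k = gmul g (t j))
                     then y (gmul (ginv g) k) else x k.
  have zt : forall i, z (t i) = x (t i).
    move=> i; rewrite /z; destruct (excluded_middle_informative _) as [[j hj]|]; last by [].
    exfalso; apply: nh1.
    have -> : f h1 = gmul (t i) (ginv (t j)).
      by rewrite hj -gmulA gmulV' gmul1'.
    rewrite /l; apply: (List.in_map _ _ (i, j)).
    by apply: in_In; rewrite mem_enum.
  have zgt : forall i, z (gmul g (t i)) = y (t i).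
    move=> i; rewrite /z; destruct (excluded_middle_informative _) as [hE|nE].
      by rewrite gmulA gmulV gmul1.
    by exfalso; apply: nE; exists i.
  have e1 : tau x gone = tau z gone.
    by rewrite !tauE; congr mu; apply/ffunP => i; rewrite !ffunE gmul1 zt.
  have e2 : tau z g = tau y gone.
    by rewrite !tauE; congr mu; apply/ffunP => i; rewrite !ffunE gmul1 zgt.
  by rewrite e1 -(Ef z h1) -/g e2.
Qed.
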